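(* Let $G$ be a finite group of order $n = n_1 n_2$ with $\gcd(n_1,n_2) = 1$ and $\gcd(n, \psi(n_1)) = 1$. Then the order of the maximal nilpotent factor group of $G$ is divisible by $n_1$.
   Context: $\psi$ is the multiplicative function with $\psi(p^k) = (p^k-1)(p^{k-1}-1)\cdots(p-1)$ for prime powers $p^k$. The maximal nilpotent factor group of $G$ is $G/B$, where $B$ is the intersection of all normal subgroups $M$ of $G$ such that $G/M$ is nilpotent. *)

(* Defs.v *)
From mathcomp Require Import all_boot all_fingroup all_solvable.
Set Implicit Arguments. Unset Strict Implicit. Unset Printing Implicit Defensive.
Open Scope group_scope.

Definition psi (n : nat) : nat :=
  \prod_(p <- primes n) \prod_(1 <= i < (logn p n).+1) (p ^ i - 1).

(* B = intersection of all normal M of G with G/M nilpotent;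
   the maximal nilpotent factor group of G is G / B. *)
Definition nil_residual (gT : finGroupType) (G : {group gT}) : {set gT} :=
  \bigcap_(M : {group gT} | (M <| G) && nilpotent (G / M)) M.

(* Main.v *)
Require Import Defs.
From mathcomp Require Import all_boot all_fingroup all_solvable.
From mathcomp Require Import ssralg zify.
From Stdlib Require Import Lia.
Set Implicit Arguments. Unset Strict Implicit. Unset Printing Implicit Defensive.
Open Scope group_scope.

Lemma L1 (gT : finGroupType) (p q : nat) (U Q : {group gT}) :
  prime q -> p.-group U -> q.-group Q -> Q \subset 'N(U) ->
  coprime #|U| #|Q| ->
  (forall i, 0 < i <= logn p #|U| -> coprime #|Q| (p ^ i - 1)) ->
  Q \subset 'C(U).
Proof.
move: {2}#|U| (leqnn #|U|) => n; elim: n gT U Q => [|n IHn] gT U Q.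
  by move=> le0; have := leq_trans (cardG_gt0 U) le0.
move=> leUn qpr pU qQ nUQ coUQ hyp.
have [-> | ntU] := eqVneq U 1%G; first exact: cents1.
have [-> | ntQ] := eqVneq Q 1%G; first by rewrite sub1G.
set Z := 'Z(U).
have ntZ : Z != 1 by rewrite /Z center_nil_eq1 ?(pgroup_nil pU).
have nZQ : Q \subset 'N(Z) := char_norm_trans (center_char U) nUQ.
have actsQZ : [acts Q, on Z | 'J] by rewrite astabsJ.
have fixm := pgroup_fix_mod qQ actsQZ.
set N := 'C_Z(Q).
have fixE : 'Fix_(Z | 'J)(Q) = N by rewrite /N afixJ.
rewrite fixE in fixm.
have ntN : N != 1.
  apply/eqP=> N1; move: fixm; rewrite N1 cards1.
  have pZ : p.-group Z := pgroupS (center_sub U) pU.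
  rewrite (card_pgroup pZ) => /eqP.
  set b := logn p #|Z|.
  have b_gt0 : 0 < b.
    rewrite lt0n; apply: contra ntZ => /eqP b0.
    by rewrite trivg_card1 (card_pgroup pZ) -/b b0.
  have bleU : b <= logn p #|U|.
    by apply: dvdn_leq_log; rewrite ?cardG_gt0 ?cardSg ?center_sub.
  have p_gt0 : 0 < p.
    by have [pr _ _] := pgroup_pdiv pU ntU; exact: prime_gt0.
  rewrite eqn_mod_dvd ?expn_gt0 ?p_gt0 // => dvq.
  have [_ dq _] := pgroup_pdiv qQ ntQ.
  have := hyp b; rewrite b_gt0 bleU => /(_ isT) co.
  move: (coprime_dvdr dvq (coprime_dvdl dq co)).
  by rewrite /coprime gcdnn => /eqP q1; rewrite q1 in qpr.
have sNZ : N \subset Z := subsetIl _ _.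
have sNU : N \subset U := subset_trans sNZ (center_sub U).
have cNQ : N \subset 'C(Q) := subsetIr _ _.
have nNU : U \subset 'N(N).
  apply: cents_norm; rewrite centsC; exact: subset_trans sNZ (subsetIr _ _).
have nNQ : Q \subset 'N(N) by apply: cents_norm; rewrite centsC.
have nsNU : N <| U by rewrite /normal sNU.
have IH := IHn _ (U / N)%G (Q / N)%G.
have cUQbar : Q / N \subset 'C(U / N).
  apply: IH => //.
  - rewrite -ltnS; apply: leq_trans leUn; exact: ltn_quotient.
  - exact: quotient_pgroup.
  - exact: quotient_pgroup.
  - exact: quotient_norms.
  - exact: coprime_morph.
  - move=> i /andP[i0 ile]; apply: coprime_dvdl (dvdn_morphim _ _) _.
    apply: hyp; rewrite i0 /=; apply: leq_trans ile _.
    by apply: dvdn_leq_log; rewrite ?cardG_gt0 ?dvdn_morphim.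
have solN : solvable N.
  apply: nilpotent_sol; apply: pgroup_nil; exact: pgroupS sNU pU.
have := coprime_norm_quotient_cent nUQ nNQ (coprimeSg sNU coUQ) solN.
have -> : 'C_(U / N)(Q / N) = U / N by apply/setIidPl; rewrite centsC.
have sCU : 'C_U(Q) \subset U := subsetIl _ _.
have nsNC : N <| 'C_U(Q).
  rewrite /normal subsetI sNU cNQ /=; exact: subset_trans sCU nNU.
move/(quotient_inj nsNC nsNU) => CU.
by rewrite centsC -CU subsetIr.
Qed.

Definition hypp p n := forall i, 0 < i <= logn p n -> coprime n (p ^ i - 1).

Lemma L2 (gT : finGroupType) (p : nat) (G U S : {group gT}) :
  prime p -> hypp p #|G| -> U \subset G -> p.-group U ->
  p.-Sylow('N_G(U)) S -> 'N_G(U) \subset 'C_G(U) * S.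
Proof.
move=> pr hyp sUG pU sylS.
set M := 'N_G(U); set C := 'C_G(U).
have sSM : S \subset M := pHall_sub sylS.
have sMG : M \subset G := subsetIl _ _.
have sMN : M \subset 'N(U) := subsetIr _ _.
have nCS : S \subset 'N(C).
  rewrite normsI //; first exact: subset_trans (subset_trans sSM sMG) (normG G).
  exact: norms_cent (subset_trans sSM sMN).
have sCM : C \subset M.
  by rewrite subsetI subsetIl /=; apply: subset_trans (subsetIr _ _) (cent_sub _).
rewrite -norm_joinEr //.
have sHM : (C <*> S)%G \subset M by rewrite join_subG sCM sSM.
suff : #|M| <= #|C <*> S|.
  by move=> le; have /eqP <- : (C <*> S)%G :==: M by rewrite eqEcard sHM.
apply: dvdn_leq; first exact: cardG_gt0.
apply/dvdn_partP => [|q]; first exact: cardG_gt0.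
rewrite mem_primes => /and3P[qpr _ _].
have [Q sylQ] := Sylow_exists q M.
have -> : (#|M|`_q)%N = #|Q| by rewrite (card_Hall sylQ).
have [eqp | nqp] := eqVneq q p.
  rewrite (card_Hall sylQ) eqp -(card_Hall sylS); apply: cardSg; exact: joing_subr.
apply: cardSg; apply: subset_trans (joing_subl _ _).
have sQM : Q \subset M := pHall_sub sylQ.
have qQ : q.-group Q := pHall_pgroup sylQ.
rewrite subsetI (subset_trans sQM sMG) /=.
apply: (L1 qpr pU qQ (subset_trans sQM sMN)) => [|i].
  apply: sub_pnat_coprime pU qQ => x; rewrite !inE => /eqP ->; exact: nqp.
move=> /andP[i0 ile]; apply: coprime_dvdl (cardSg (subset_trans sQM sMG)) _.
apply: hyp; rewrite i0 /=; apply: leq_trans ile _.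
by apply: dvdn_leq_log; rewrite ?cardG_gt0 ?cardSg.
Qed.

Lemma conj_cent (gT : finGroupType) (A : {set gT}) c a :
  c \in 'C(A) -> a \in A -> a ^ c = a.
Proof.
move=> cAc Aa; have cca : commute c a := centP cAc a Aa.
by rewrite conjgE -cca mulKg.
Qed.

Lemma arith_lem a b c k : a - b <= k.+1 -> b < c -> a - c <= k.
Proof. lia. Qed.

Section Fus.
Variables (gT : finGroupType) (p : nat) (G P : {group gT}).
Hypotheses (pr : prime p) (hyp : hypp p #|G|) (sylP : p.-Sylow(G) P).

Definition lk (A : {set gT}) g :=
  exists2 u, u \in P & {in A, forall a, a ^ g = a ^ u}.

Let sPG : P \subset G := pHall_sub sylP.
Let pP : p.-group P := pHall_pgroup sylP.

Lemma L2' (B : {group gT}) n : B \subset P ->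
  p.-Sylow('N_G(B)) 'N_P(B) -> n \in 'N_G(B) -> lk B n.
Proof.
move=> sBP sylN Nn.
have := subsetP (L2 pr hyp (subset_trans sBP sPG) (pgroupS sBP pP) sylN) n Nn.
case/mulsgP=> c v /setIP[_ cBc] /setIP[Pv _] ->.
by exists v => // b Bb; rewrite conjgM (conj_cent cBc Bb).
Qed.

Lemma Claim1 (A B : {group gT}) h :
  A \subset P -> A \proper P -> B \subset P -> p.-Sylow('N_G(B)) 'N_P(B) ->
  h \in G -> A :^ h = B ->
  (forall g', g' \in G -> 'N_P(A) :^ g' \subset P -> lk 'N_P(A) g') ->
  lk A h.
Proof.
move=> sAP ltAP sBP sylN Gh AhB IH.
have sNG : ('N_P(A) :^ h)%G \subset 'N_G(B).
  rewrite -AhB normJ -(conjGid Gh) -conjIg conjSg setISS //.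
have pNh : p.-group ('N_P(A) :^ h)%G by rewrite /= pgroupJ (pgroupS (subsetIl _ _) pP).
have [x Nx sNx] := Sylow_Jsub sylN sNG pNh.
have Gx : x \in G := subsetP (subsetIl _ _) x Nx.
have NBx : x \in 'N(B) := subsetP (subsetIr _ _) x Nx.
have [u Pu Hu] : lk 'N_P(A) (h * x).
  apply: IH; first by rewrite groupM.
  by rewrite conjsgM; apply: subset_trans sNx (subsetIl _ _).
have [v Pv Hv] : lk B x^-1.
  by apply: L2' => //; rewrite groupV.
exists (u * v); first by rewrite groupM.
move=> a Aa.
have NAa : a \in 'N_P(A).
  by rewrite inE (subsetP sAP) //= (subsetP (normG A)).
have Ba : a ^ (h * x) \in B.
  by rewrite conjgM memJ_norm // -AhB memJ_conjg.
by rewrite -[h]mulg1 -(mulgV x) mulgA conjgM Hv // Hu // conjgM.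
Qed.

Lemma Claim2 (A : {group gT}) : A \subset P ->
  exists B : {group gT}, exists2 h, h \in G &
    [/\ A :^ h = B, B \subset P & p.-Sylow('N_G(B)) 'N_P(B)].
Proof.
move=> sAP.
pose S := fun B : {group gT} => (B \subset P) && (gval B \in A :^: G).
have SA : S A by rewrite /S sAP /=; apply/imsetP; exists 1; rewrite ?group1 ?conjsg1.
case: (arg_maxnP (fun B : {group gT} => #|'N_P(B)|) SA) => B0 /andP[sB0P B0in] maxB.
move/imsetP: B0in => [h0 Gh0 B0E].
exists B0, h0 => //; split=> //.
have sN0 : 'N_P(B0) \subset 'N_G(B0) by apply: setSI.
have [T sylT sNT] := Sylow_superset sN0 (pgroupS (subsetIl _ _) pP).
have [k Gk sTk] := Sylow_Jsub sylP (subset_trans (pHall_sub sylT) (subsetIl _ _))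
                    (pHall_pgroup sylT).
have sB0T : B0 \subset T.
  by apply: subset_trans sNT; rewrite subsetI sB0P normG.
have SB1 : S (B0 :^ k)%G.
  rewrite /S /= (subset_trans _ sTk) ?conjSg //=.
  by apply/imsetP; exists (h0 * k); rewrite ?groupM // B0E conjsgM.
have := maxB _ SB1.
have sTN1 : T :^ k \subset 'N_P(B0 :^ k).
  rewrite subsetI sTk normJ conjSg.
  exact: subset_trans (pHall_sub sylT) (subsetIr _ _).
move/(leq_trans (subset_leq_card sTN1)); rewrite cardJg => leT.
have -> : 'N_P(B0) = T.
  by apply/eqP; rewrite eqEcard sNT leT.
exact: sylT.
Qed.

Lemma FUS k (A : {group gT}) : #|P| - #|A| <= k -> A \subset P ->
  forall g, g \in G -> A :^ g \subset P -> lk A g.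
Proof.
elim: k A => [|k IHk] A leK sAP g Gg sAgP.
- have eAP : A = P.
    apply: val_inj; apply/eqP; rewrite eqEcard sAP /=; by rewrite -subn_eq0 -leqn0.
  subst A.
  have eP : P :^ g = P by apply/eqP; rewrite eqEcard sAgP cardJg leqnn.
  apply: L2' => //.
    by rewrite (setIidPl (normG P)); apply: pHall_subl sylP => //;
       [rewrite subsetI sPG normG | apply: subsetIl].
  by rewrite inE Gg; apply/normP.
- have [eAP | neAP] := eqVneq A P.
    subst A.
    have eP : P :^ g = P by apply/eqP; rewrite eqEcard sAgP cardJg leqnn.
    apply: L2' => //.
      by rewrite (setIidPl (normG P)); apply: pHall_subl sylP => //;
         [rewrite subsetI sPG normG | apply: subsetIl].
    by rewrite inE Gg; apply/normP.
  have ltAP : A \proper P by rewrite properEneq neAP sAP.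
  have IH : forall g', g' \in G -> 'N_P(A) :^ g' \subset P -> lk 'N_P(A) g'.
    apply: IHk; last exact: subsetIl.
    have := nilpotent_proper_norm (pgroup_nil pP) ltAP.
    move/proper_card => lt; move: leK lt; apply: arith_lem.
  have [B [h0 Gh0 [AhB sBP sylB]]] := Claim2 sAP.
  have [u Pu Hu] := Claim1 sAP ltAP sBP sylB Gh0 AhB IH.
  pose A' := (A :^ g)%G.
  have ltA'P : A' \proper P.
    by rewrite properEcard sAgP /= cardJg (proper_card ltAP).
  have IH' : forall g', g' \in G -> 'N_P(A') :^ g' \subset P -> lk 'N_P(A') g'.
    apply: IHk; last exact: subsetIl.
    have := nilpotent_proper_norm (pgroup_nil pP) ltA'P.
    move/proper_card => lt; move: leK lt.
    have eA : #|A'| = #|A| by rewrite /= cardJg.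
    by rewrite eA; apply: arith_lem.
  have A'E : A' :^ (g^-1 * h0) = B by rewrite /= -conjsgM mulKVg.
  have [u1 Pu1 Hu1] := Claim1 sAgP ltA'P sBP sylB (groupM (groupVr Gg) Gh0) A'E IH'.
  exists (u * u1^-1); first by rewrite groupM ?groupV.
  move=> a Aa.
  have E : (a ^ g) ^ u1 = a ^ u.
    rewrite -(Hu1 (a ^ g)); last by rewrite /= memJ_conjg.
    by rewrite -conjgM mulKVg Hu.
  by rewrite conjgM -E conjgK.
Qed.
End Fus.

Lemma L4 (gT : finGroupType) (p : nat) (G P : {group gT}) :
  prime p -> hypp p #|G| -> p.-Sylow(G) P -> P :!=: 1 ->
  exists K : {group gT}, [/\ K <| G, K \proper G & p.-nat #|G : K|].
Proof.
move=> pr hyp sylP ntP.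
have sPG := pHall_sub sylP; have pP := pHall_pgroup sylP.
have nPP' : P \subset 'N(P^`(1)) := der_norm 1 P.
pose alpha := restrm_morphism nPP' (coset_morphism P^`(1)).
have abelA : abelian (alpha @* P).
  by rewrite morphim_restrm setIid; exact: (der_abelian 0 P).
have alphaJ y u : y \in P -> u \in P -> alpha (y ^ u) = alpha y.
  move=> Py Pu; rewrite morphJ //.
  apply: (conj_cent (A := alpha @* P)); last by apply: mem_morphim.
  by apply: (subsetP abelA); apply: mem_morphim.
pose fm := FiniteModule.fmod abelA.
have trE g : g \in P -> transfer G abelA g = (fm (alpha g) *+ #|G : P|)%R.
  move=> Pg; have Gg := subsetP sPG g Pg.
  have trX := transversalP (rcosets_cycle_partition sPG Gg).
  rewrite (transfer_cycle_expansion sPG abelA Gg trX).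
  rewrite -(sum_index_rcosets_cycle sPG Gg trX) -GRing.sumrMnr.
  apply: eq_bigr => x Xx.
  have Gx : x \in G := subsetP (transversal_sub trX) x Xx.
  set n := #|<[g]> : P :* x|.
  have Pgn : g ^+ n \in P by rewrite groupX.
  have Pc : (g ^+ n) ^ x^-1 \in P.
    have := mulg_exp_card_rcosets P g x; rewrite mem_rcoset.
    by rewrite conjgE invgK mulgA.
  have [u Pu Hu] : lk P <[g ^+ n]> x^-1.
    apply: (FUS pr hyp sylP (leqnn _)); rewrite ?cycle_subG ?groupV //.
    by rewrite -cycleJ cycle_subG.
  have -> : (g ^+ n) ^ x^-1 = (g ^+ n) ^ u by apply: Hu; exact: cycle_id.
  change (fm (alpha ((g ^+ n) ^ u)) = fm (alpha g) *+ n)%R.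
  rewrite alphaJ // morphX //.
  by rewrite /fm FiniteModule.fmodX // mem_morphim.
have sP'P : P^`(1) \proper P.
  exact: sol_der1_proper (nilpotent_sol (pgroup_nil pP)) (subxx P) ntP.
have [_ [g Pg nP'g]] := properP sP'P.
pose f := transfer_morphism G abelA.
have Gg := subsetP sPG g Pg.
have [_ _ p'GP] := and3P sylP.
have gnK : g \notin 'ker f.
  apply/negP => /(kerP f Gg) => fg1.
  have : FiniteModule.fmval (fm (alpha g) *+ #|G : P|)%R = 1.
    by rewrite -trE //; move: fg1 => /= ->.
  rewrite FiniteModule.fmvalZ /fm FiniteModule.fmodK ?mem_morphim // => ag1.
  have pag : p.-elt (alpha g) by apply: mem_p_elt (morphim_pgroup _ pP) _; apply: mem_morphim.
  have : #[alpha g] = 1%N.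
    apply: (pnat_1 pag); apply: pnat_dvd p'GP; by rewrite order_dvdn ag1.
  move/eqP; rewrite order_eq1 => /eqP ag.
  apply: (negP nP'g); apply: coset_idr; first exact: subsetP nPP' g Pg.
  exact: ag.
exists ('ker f)%G; split.
- exact: ker_normal.
- by apply/properP; split; [exact: subsetIl | exists g].
have cardE : #|G : 'ker f| = #|f @* G| by rewrite card_morphim setIid.
rewrite cardE; apply: (pnat_dvd _ (morphim_pgroup alpha pP)).
apply: dvdn_trans (cardSg (subsetT (f @* G))) _.
rewrite cardsT card_sub.
by rewrite (eq_card (B := alpha @* P)) // => x; rewrite inE.
Qed.

Lemma hypp_dvd p m n : 0 < n -> m %| n -> hypp p n -> hypp p m.
Proof.
rewrite /hypp.
move=> n0 dmn hyp i /andP[i0 ile]; apply: (coprime_dvdl dmn).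
by apply: hyp; rewrite i0 (leq_trans ile) ?dvdn_leq_log.
Qed.

Lemma L5 (p : nat) : prime p -> forall (gT : finGroupType) (G : {group gT}),
  hypp p #|G| ->
  exists K : {group gT}, [/\ K <| G, p^'.-group K & p.-nat #|G : K|].
Proof.
move=> pr gT G; move: {2}#|G| (leqnn #|G|) => n; elim: n G => [|n IHn] G.
  by move=> le0; have := leq_trans (cardG_gt0 G) le0.
move=> leGn hyp.
have [P sylP] := Sylow_exists p G.
have [sPG pP p'GP] := and3P sylP.
have [P1 | ntP] := eqVneq P 1%G.
  exists G; split; [exact: normal_refl | | by rewrite indexgg].
  by move: p'GP; rewrite P1 /= indexg1.
have [K0 [nsK0G ltK0G pK0]] := L4 pr hyp sylP ntP.
have sK0G := proper_sub ltK0G.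
have [M [nsMK0 p'M pMK0]] : exists M : {group gT},
    [/\ M <| K0, p^'.-group M & p.-nat #|K0 : M|].
  apply: IHn; first by rewrite -ltnS (leq_trans (proper_card ltK0G)).
  exact: hypp_dvd (cardG_gt0 G) (cardSg sK0G) hyp.
exists M; split=> //.
  have hallM : p^'.-Hall(K0) M.
    by rewrite /pHall (normal_sub nsMK0) p'M pnatNK.
  rewrite -(normal_Hall_pcore hallM nsMK0).
  exact: char_normal_trans (pcore_char _ _) nsK0G.
by rewrite -(Lagrange_index sK0G (normal_sub nsMK0)) pnatM pK0 pMK0.
Qed.

Theorem mainTheorem15 (gT : finGroupType) (G : {group gT}) (n1 n2 : nat) :
  #|G| = (n1 * n2)%N -> coprime n1 n2 -> coprime #|G| (psi n1) ->
  (n1 %| #|(G / nil_residual G)%g|)%N.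
Proof.
move=> oG co12 copsi.
have n12pos : (0 < n1 * n2)%N by rewrite -oG cardG_gt0.
have n1pos : (0 < n1)%N by move: n12pos; rewrite muln_gt0 => /andP[].
have n2pos : (0 < n2)%N by move: n12pos; rewrite muln_gt0 => /andP[].
pose PP := fun M : {group gT} => (M <| G) && nilpotent (G / M).
pose BG := Group (group_set_bigcap PP (fun M : {group gT} => M)).
change (n1 %| #|G / gval BG|)%N.
have nBG : G \subset 'N(BG).
  apply: norms_bigcap; apply/bigcapsP => M /andP[nsMG _]; exact: normal_norm.
rewrite card_quotient //.
apply/dvdn_partP => // q; rewrite mem_primes => /and3P[qpr _ qn1].
have coqn2 : coprime q n2 := coprime_dvdl qn1 co12.
have logE : logn q #|G| = logn q n1.
  by rewrite oG lognM // (logn_coprime coqn2) addn0.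
have hyp : hypp q #|G|.
  move=> i /andP[i0 ile]; apply: coprime_dvdr _ copsi.
  rewrite /psi (bigD1_seq q) ?primes_uniq ?mem_primes ?qpr ?n1pos ?qn1 //=.
  apply: dvdn_mulr; rewrite logE in ile.
  rewrite (@big_cat_nat _ _ _ i.+1) //= ?ltnS // big_nat_recr //=.
  by apply: dvdn_mulr; apply: dvdn_mull.
have [K [nsKG q'K qGK]] := L5 qpr hyp.
have sBK : BG \subset K.
  apply: (bigcap_inf K (P := PP) (F := fun M : {group gT} => gval M)).
  rewrite /PP nsKG /=; apply: (pgroup_nil (p := q)).
  by rewrite /pgroup card_quotient ?normal_norm.
apply: dvdn_trans (indexgS G sBK).
have -> : #|G : K| = (#|G|`_q)%N.
  rewrite -(Lagrange (normal_sub nsKG)) partnM ?cardG_gt0 //.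
  by rewrite (part_p'nat q'K) (part_pnat_id qGK) mul1n.
rewrite oG partnM // (part_p'nat (n := n2)) ?muln1 //.
by rewrite p'natE // -prime_coprime.
Qed.
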